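(* Let $p\ge 1$ and let $Y:\overline{\mathcal{K}}_o^n\to\overline{\mathcal{K}}_o^n$ be an $L_p$-Minkowski valuation. Suppose that for every $n$-dimensional $K\in\overline{\mathcal{K}}_o^n$, every $\phi\in SL(n)$ and every $\lambda>0$ one has $Y(\phi K)=\phi\,YK$ (respectively $Y(\phi K)=\phi^{-t}YK$) and $Y(\lambda K)=\lambda^qYK$. Then these identities hold for every $K\in\overline{\mathcal{K}}_o^n$, i.e. $Y$ is $SL(n)$ covariant (respectively contravariant) and homogeneous of degree $q$ on all of $\overline{\mathcal{K}}_o^n$.
   Context: A convex body is a nonempty compact convex subset of $\mathbb{R}^n$. $\overline{\mathcal{K}}_o^n$ denotes the set of all convex bodies in $\mathbb{R}^n$ containing the origin (of any dimension). $h_K(x)=\max\{x\cdot y:y\in K\}$ is the support function; $\phi^{-t}$ is the inverse of the transpose of $\phi$. A map $Y:\overline{\mathcal{K}}_o^n\to\overline{\mathcal{K}}_o^n$ is an $L_p$-Minkowski valuation if $h_{Y(K\cup L)}^p+h_{Y(K\cap L)}^p=h_{YK}^p+h_{YL}^p$ whenever $K,L,K\cup L\in\overline{\mathcal{K}}_o^n$. *)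

(* Defs.v *)
(* classical reals. Points of R^n are functions nat -> R
   vanishing at coordinates >= n. *)
From Stdlib Require Import Reals ClassicalEpsilon.
Open Scope R_scope.

Definition vec := nat -> R.
Definition vset := vec -> Prop.

Definition inRn (n : nat) (x : vec) : Prop := forall i, (n <= i)%nat -> x i = 0.

Definition origin : vec := fun _ => 0.

Fixpoint rsum (n : nat) (f : nat -> R) : R :=
  match n with O => 0 | S m => rsum m f + f m end.

Definition dot (n : nat) (x y : vec) : R := rsum n (fun i => x i * y i).

(* n x n matrices, entries (i,j) with i,j < n are meaningful *)
Definition mat := nat -> nat -> R.

Fixpoint det (n : nat) (A : mat) : R :=
  match n with
  | O => 1
  | S m => rsum (S m) (fun j =>
      (-1) ^ j * A 0%nat j *
      det m (fun i k => A (S i) (if Nat.ltb k j then k else S k)))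
  end.

Definition SL (n : nat) (A : mat) : Prop := det n A = 1.

Definition mapply (n : nat) (A : mat) (x : vec) : vec :=
  fun i => if Nat.ltb i n then rsum n (fun j => A i j * x j) else 0.

Definition inv_transpose (n : nat) (A B : mat) : Prop :=
  forall i j, (i < n)%nat -> (j < n)%nat ->
    rsum n (fun k => A k i * B k j) = if Nat.eqb i j then 1 else 0.

Definition img (n : nat) (A : mat) (K : vset) : vset :=
  fun y => exists x, K x /\ y = mapply n A x.

Definition dilate (l : R) (K : vset) : vset :=
  fun y => exists x, K x /\ y = (fun i => l * x i).

Definition setU (K L : vset) : vset := fun x => K x \/ L x.
Definition setI (K L : vset) : vset := fun x => K x /\ L x.

Definition convex_body (n : nat) (K : vset) : Prop :=
  (forall x, K x -> inRn n x) /\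
  (exists x, K x) /\
  (forall x y t, K x -> K y -> 0 <= t <= 1 ->
     K (fun i => t * x i + (1 - t) * y i)) /\
  (exists M, forall x, K x -> forall i, Rabs (x i) <= M) /\
  (forall (u : nat -> vec) (x : vec), (forall k, K (u k)) ->
     (forall i, Un_cv (fun k => u k i) (x i)) -> K x).

Definition Ko (n : nat) (K : vset) : Prop := convex_body n K /\ K origin.

Definition lin_indep (n : nat) (v : nat -> vec) : Prop :=
  forall c : nat -> R,
    (forall j, (j < n)%nat -> rsum n (fun i => c i * v i j) = 0) ->
    forall i, (i < n)%nat -> c i = 0.

(* K is n-dimensional: its affine hull is all of R^n, i.e. it contains
   n+1 affinely independent points *)
Definition full_dim (n : nat) (K : vset) : Prop :=
  exists (x0 : vec) (v : nat -> vec),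
    K x0 /\ (forall i, (i < n)%nat -> K (v i)) /\
    lin_indep n (fun i j => v i j - x0 j).

Definition is_max_dot (n : nat) (K : vset) (x : vec) (v : R) : Prop :=
  (exists y, K y /\ dot n x y = v) /\ (forall y, K y -> dot n x y <= v).

Definition hsupp (n : nat) (K : vset) (x : vec) : R :=
  epsilon (inhabits 0) (is_max_dot n K x).

(* a^p for a >= 0, with 0^p = 0 (p >= 1) *)
Definition powr (a p : R) : R := if Rlt_dec 0 a then Rpower a p else 0.

Definition Lp_Minkowski_valuation (n : nat) (p : R) (Y : vset -> vset) : Prop :=
  (forall K, Ko n K -> Ko n (Y K)) /\
  (forall K L, Ko n K -> Ko n L -> Ko n (setU K L) ->
     forall x, inRn n x ->
       powr (hsupp n (Y (setU K L)) x) p + powr (hsupp n (Y (setI K L)) x) p =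
       powr (hsupp n (Y K) x) p + powr (hsupp n (Y L) x) p).

(* Main.v *)
Require Import Defs.
From Stdlib Require Import Reals Lra Lia Classical ClassicalEpsilon FunctionalExtensionality PropExtensionality.
Set Warnings "-notation-overridden,-ambiguous-paths".
From mathcomp Require ssreflect ssrfun ssrbool eqtype ssrnat seq fintype bigop ssralg matrix Rstruct.
Open Scope R_scope.

Lemma rsum_ext n f g : (forall i, (i < n)%nat -> f i = g i) -> rsum n f = rsum n g.
Proof. induction n; simpl; intros H; [reflexivity|]. rewrite IHn by (intros; apply H; lia). rewrite H by lia. reflexivity. Qed.

Lemma rsum_lin n a b f g : rsum n (fun i => a * f i + b * g i) = a * rsum n f + b * rsum n g.
Proof. induction n; simpl; [ring|]. rewrite IHn. ring. Qed.

Lemma rsum_plus n f g : rsum n (fun i => f i + g i) = rsum n f + rsum n g.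
Proof. induction n; simpl; [ring|]. rewrite IHn. ring. Qed.

Lemma rsum_scal n a f : rsum n (fun i => a * f i) = a * rsum n f.
Proof. induction n; simpl; [ring|]. rewrite IHn. ring. Qed.

Lemma rsum_zero n : rsum n (fun _ => 0) = 0.
Proof. induction n; simpl; [ring|]. rewrite IHn. ring. Qed.

Lemma rsum_swap n m (f : nat -> nat -> R) :
  rsum n (fun i => rsum m (fun j => f i j)) = rsum m (fun j => rsum n (fun i => f i j)).
Proof. induction n; simpl. - rewrite rsum_zero. reflexivity.
  - rewrite IHn. rewrite <- rsum_plus. reflexivity. Qed.

Lemma rsum_pick n r F : (r < n)%nat ->
  rsum n F = F r + rsum n (fun i => if Nat.eqb i r then 0 else F i).
Proof.
  induction n; intros H; [lia|]. simpl.
  destruct (Nat.eq_dec r n) as [->|Hne].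
  - rewrite Nat.eqb_refl. rewrite (rsum_ext n (fun i => if Nat.eqb i n then 0 else F i) F).
    + ring.
    + intros i Hi. destruct (Nat.eqb_spec i n); [lia|reflexivity].
  - rewrite IHn by lia. destruct (Nat.eqb_spec n r); [lia|]. ring.
Qed.

Lemma rsum_delta n r a : (r < n)%nat -> rsum n (fun i => if Nat.eqb i r then a else 0) = a.
Proof. intros H. rewrite (rsum_pick n r) by lia. rewrite Nat.eqb_refl.
  rewrite (rsum_ext n _ (fun _ => 0)). rewrite rsum_zero; ring.
  intros i _. destruct (Nat.eqb i r); reflexivity. Qed.

Lemma rsum_le n f g : (forall i, (i < n)%nat -> f i <= g i) -> rsum n f <= rsum n g.
Proof. induction n; simpl; intros H; [lra|]. specialize (IHn (fun i Hi => H i ltac:(lia))). specialize (H n ltac:(lia)). lra. Qed.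

Lemma rsum_nonneg n f : (forall i, (i < n)%nat -> 0 <= f i) -> 0 <= rsum n f.
Proof. intros H. rewrite <- (rsum_zero n). apply rsum_le. auto. Qed.

Lemma rsum_abs n f : Rabs (rsum n f) <= rsum n (fun i => Rabs (f i)).
Proof. induction n; simpl. rewrite Rabs_R0; lra. eapply Rle_trans; [apply Rabs_triang|]. lra. Qed.

Lemma rsum_term n f r : (r < n)%nat -> (forall i, (i < n)%nat -> 0 <= f i) -> f r <= rsum n f.
Proof. intros Hr H. rewrite (rsum_pick n r) by auto.
  assert (0 <= rsum n (fun i => if Nat.eqb i r then 0 else f i)).
  { apply rsum_nonneg. intros i Hi. destruct (Nat.eqb i r); [lra|auto]. } lra. Qed.

Lemma abs_le x M : Rabs x <= M -> -M <= x <= M.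
Proof. unfold Rabs; destruct (Rcase_abs x); lra. Qed.
Lemma abs_le2 x M : -M <= x <= M -> Rabs x <= M.
Proof. unfold Rabs; destruct (Rcase_abs x); lra. Qed.

Lemma cv_const c : Un_cv (fun _ => c) c.
Proof. intros e He. exists 0%nat. intros. unfold R_dist. rewrite Rminus_diag, Rabs_R0. lra. Qed.

Lemma cv_ext u v l : (forall k, u k = v k) -> Un_cv u l -> Un_cv v l.
Proof. intros H Hu e He. destruct (Hu e He) as [N HN]. exists N. intros k Hk. rewrite <- H. auto. Qed.

Lemma cv_sub u l (phi : nat -> nat) : (forall k, (k <= phi k)%nat) -> Un_cv u l -> Un_cv (fun k => u (phi k)) l.
Proof. intros Hp Hu e He. destruct (Hu e He) as [N HN]. exists N. intros k Hk. apply HN. specialize (Hp k). lia. Qed.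

Lemma cv_rsum n (f : nat -> nat -> R) g :
  (forall j, (j < n)%nat -> Un_cv (fun k => f k j) (g j)) ->
  Un_cv (fun k => rsum n (fun j => f k j)) (rsum n g).
Proof.
  induction n; intros H; simpl.
  - apply cv_const.
  - apply CV_plus. apply IHn. intros; apply H; lia. apply H; lia.
Qed.

Lemma cv_le_lower u l c : (forall k, c <= u k) -> Un_cv u l -> c <= l.
Proof. intros H Hu. destruct (Rle_dec c l) as [|Hn]; auto. exfalso.
  destruct (Hu (c - l)) as [N HN]; [lra|]. specialize (HN N (le_n _)). specialize (H N).
  unfold R_dist in HN. apply Rabs_def2 in HN. lra. Qed.

Lemma cv_le_upper u l c : (forall k, u k <= c) -> Un_cv u l -> l <= c.
Proof. intros H Hu. destruct (Rle_dec l c) as [|Hn]; auto. exfalso.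
  destruct (Hu (l - c)) as [N HN]; [lra|]. specialize (HN N (le_n _)). specialize (H N).
  unfold R_dist in HN. apply Rabs_def2 in HN. lra. Qed.

Lemma cv_eps_lower u l c : (forall k, c - / INR (S k) <= u k) -> Un_cv u l -> c <= l.
Proof. intros H Hu. destruct (Rle_dec c l) as [|Hn]; auto. exfalso.
  set (e := (c - l)/2).
  assert (He : 0 < e) by (unfold e; lra).
  destruct (archimed_cor1 e He) as [m [Hm1 Hm2]].
  destruct (Hu e He) as [N HN]. set (k := max N m).
  specialize (HN k ltac:(unfold k; lia)). specialize (H k).
  assert (/ INR (S k) <= / INR m).
  { apply Rinv_le_contravar; [apply lt_0_INR; lia | apply le_INR; unfold k; lia]. }
  unfold R_dist in HN. apply Rabs_def2 in HN. unfold e in *. lra.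
Qed.

Lemma bw1 (u : nat -> R) a b : (forall k, a <= u k <= b) ->
  exists phi l, (forall k, (k <= phi k)%nat) /\ Un_cv (fun k => u (phi k)) l.
Proof.
  intros H. destruct (Bolzano_Weierstrass u (fun c => a <= c <= b) (compact_P3 a b) H) as [l Hl].
  assert (Hex : forall N, exists p, (N <= p)%nat /\ Rabs (u p - l) < / INR (S N)).
  { intros N. assert (Hp : 0 < / INR (S N)) by (apply Rinv_0_lt_compat, lt_0_INR; lia).
    destruct (Hl (disc l (mkposreal _ Hp)) N) as [p [Hp1 Hp2]].
    - exists (mkposreal _ Hp). intros y Hy; exact Hy.
    - exists p. split; [exact Hp1|]. unfold disc in Hp2. exact Hp2. }
  destruct (choice _ Hex) as [phi Hphi].
  exists phi, l. split. intros k; apply Hphi.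
  intros e He. destruct (archimed_cor1 e He) as [m [Hm1 Hm2]].
  exists m. intros k Hk. unfold R_dist. destruct (Hphi k) as [_ H2].
  assert (/ INR (S k) <= / INR m).
  { apply Rinv_le_contravar; [apply lt_0_INR; lia | apply le_INR; lia]. } lra.
Qed.

Lemma bwn (y : nat -> vec) M : (forall k i, Rabs (y k i) <= M) ->
  forall d, exists phi x, (forall k, (k <= phi k)%nat) /\
    forall i, (i < d)%nat -> Un_cv (fun k => y (phi k) i) (x i).
Proof.
  intros HM d. induction d.
  - exists (fun k => k), (fun _ => 0). split; [intros; lia| intros; lia].
  - destruct IHd as [phi [x [Hphi Hx]]].
    destruct (bw1 (fun k => y (phi k) d) (-M) M) as [psi [l [Hpsi Hl]]].
    { intros k. specialize (HM (phi k) d). apply abs_le in HM. lra. }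
    exists (fun k => phi (psi k)), (fun i => if Nat.eqb i d then l else x i). split.
    + intros k. specialize (Hpsi k). specialize (Hphi (psi k)). lia.
    + intros i Hi. destruct (Nat.eqb_spec i d) as [->|Hne].
      * exact Hl.
      * apply (cv_sub (fun k => y (phi k) i)); auto. apply Hx. lia.
Qed.


Lemma sq_nonneg x : 0 <= x * x.
Proof. apply Rle_0_sqr. Qed.

Lemma cv_eps_upper u l c : (forall k, u k <= c + / INR (S k)) -> Un_cv u l -> l <= c.
Proof. intros H Hu. destruct (Rle_dec l c) as [|Hn]; auto. exfalso.
  set (e := (l - c)/2).
  assert (He : 0 < e) by (unfold e; lra).
  destruct (archimed_cor1 e He) as [m [Hm1 Hm2]].
  destruct (Hu e He) as [N HN]. set (k := max N m).
  specialize (HN k ltac:(unfold k; lia)). specialize (H k).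
  assert (/ INR (S k) <= / INR m).
  { apply Rinv_le_contravar; [apply lt_0_INR; lia | apply le_INR; unfold k; lia]. }
  unfold R_dist in HN. apply Rabs_def2 in HN. unfold e in *. lra.
Qed.

Lemma inRn_bound n u : inRn n u -> exists B, forall i, Rabs (u i) <= B.
Proof. intros H. exists (rsum n (fun j => Rabs (u j))). intros i.
  destruct (Nat.lt_ge_cases i n) as [Hi|Hi].
  - apply (rsum_term n (fun j => Rabs (u j))); auto. intros; apply Rabs_pos.
  - rewrite H by auto. rewrite Rabs_R0. apply rsum_nonneg. intros; apply Rabs_pos.
Qed.

Lemma Ko_in n C x : Ko n C -> C x -> inRn n x.
Proof. intros [[H _] _]. auto. Qed.

Lemma cv_pts n C (y : nat -> vec) : Ko n C -> (forall k, C (y k)) ->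
  exists phi x, (forall k, (k <= phi k)%nat) /\ C x /\ forall i, Un_cv (fun k => y (phi k) i) (x i).
Proof.
  intros HK Hy. destruct HK as [[Hin [Hne [Hcv [[M HM] Hcl]]]] Ho].
  destruct (bwn y M (fun k i => HM _ (Hy k) i) n) as [phi [x [Hphi Hx]]].
  set (x' := fun i => if Nat.ltb i n then x i else 0).
  assert (Hc : forall i, Un_cv (fun k => y (phi k) i) (x' i)).
  { intros i. unfold x'. destruct (Nat.ltb_spec i n).
    - auto.
    - apply (cv_ext (fun _ => 0)). intros k. rewrite (Hin _ (Hy (phi k)) i) by lia. reflexivity.
      apply cv_const. }
  exists phi, x'. split; [auto|split; [|auto]].
  apply (Hcl (fun k => y (phi k))); auto.
Qed.

Lemma dot_bound n C a : Ko n C -> exists B, forall c, C c -> dot n a c <= B.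
Proof.
  intros [[Hin [Hne [Hcv [[M HM] Hcl]]]] Ho].
  exists (rsum n (fun i => Rabs (a i) * M)). intros c Hc. unfold dot. apply rsum_le. intros i _.
  eapply Rle_trans; [apply Rle_abs|]. rewrite Rabs_mult. apply Rmult_le_compat_l. apply Rabs_pos. auto.
Qed.

Lemma cv_dot n a (y : nat -> vec) x : (forall i, Un_cv (fun k => y k i) (x i)) ->
  Un_cv (fun k => dot n a (y k)) (dot n a x).
Proof. intros H. unfold dot. apply cv_rsum. intros j _. apply CV_mult. apply cv_const. auto. Qed.

Lemma attain n C a : Ko n C -> exists y, C y /\ forall z, C z -> dot n a z <= dot n a y.
Proof.
  intros HK. destruct (dot_bound n C a HK) as [B HB].
  set (E := fun r => exists c, C c /\ r = dot n a c).
  assert (HEb : bound E). { exists B. intros r [c [Hc ->]]. auto. }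
  assert (HEn : exists r, E r). { destruct HK as [_ Ho]. exists (dot n a origin). exists origin. auto. }
  destruct (completeness E HEb HEn) as [s [Hs1 Hs2]].
  assert (Hex : forall k, exists c, C c /\ s - / INR (S k) <= dot n a c).
  { intros k. apply NNPP. intros Hn.
    assert (Hpos : 0 < / INR (S k)) by (apply Rinv_0_lt_compat, lt_0_INR; lia).
    assert (s <= s - / INR (S k)); [|lra].
    apply Hs2. intros r [c [Hc ->]]. destruct (Rle_dec (dot n a c) (s - / INR (S k))); auto.
    exfalso. apply Hn. exists c. split; auto. lra. }
  destruct (choice _ Hex) as [c Hc].
  destruct (cv_pts n C c HK (fun k => proj1 (Hc k))) as [phi [y [Hphi [Hy Hcv]]]].
  exists y. split; auto. intros z Hz.
  assert (dot n a z <= s) by (apply Hs1; exists z; auto).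
  assert (s <= dot n a y); [|lra].
  apply (cv_eps_lower (fun k => dot n a (c (phi k)))).
  - intros k. destruct (Hc (phi k)) as [_ H2].
    assert (/ INR (S (phi k)) <= / INR (S k)).
    { apply Rinv_le_contravar; [apply lt_0_INR; lia | apply le_INR; specialize (Hphi k); lia]. }
    lra.
  - apply cv_dot. auto.
Qed.

Lemma hsupp_spec n C a : Ko n C -> is_max_dot n C a (hsupp n C a).
Proof.
  intros HK. unfold hsupp. apply epsilon_spec.
  destruct (attain n C a HK) as [y [Hy Hm]]. exists (dot n a y). split; eauto.
Qed.

Lemma dot_origin n a : dot n a origin = 0.
Proof. unfold dot, origin. rewrite (rsum_ext n _ (fun _ => 0)). apply rsum_zero. intros; ring. Qed.

Lemma hsupp_nonneg n C a : Ko n C -> 0 <= hsupp n C a.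
Proof. intros HK. destruct (hsupp_spec n C a HK) as [_ H]. rewrite <- (dot_origin n a). apply H. apply HK. Qed.

Lemma rsum_lin3 n a b c f g h : rsum n (fun i => a * f i + b * g i + c * h i) = a * rsum n f + b * rsum n g + c * rsum n h.
Proof. induction n; simpl; [ring|]. rewrite IHn. ring. Qed.

Lemma rsum_sq_zero n f : rsum n (fun i => f i * f i) = 0 -> forall i, (i < n)%nat -> f i = 0.
Proof. intros H i Hi. assert (f i * f i <= 0).
  { rewrite <- H. apply (rsum_term n (fun i => f i * f i)); auto. intros; apply sq_nonneg. } pose proof (sq_nonneg (f i)). nra. Qed.

Lemma sep n C1 C2 : Ko n C1 -> Ko n C2 -> (forall a, inRn n a -> hsupp n C1 a = hsupp n C2 a) ->
  forall z, C2 z -> C1 z.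
Proof.
  intros H1 H2 Hh z Hz. apply NNPP. intros Hnz.
  assert (Hzin : inRn n z) by (eapply Ko_in; eauto).
  set (dz := fun c : vec => dot n (fun i => z i - c i) (fun i => z i - c i)).
  assert (Hdz0 : forall c, 0 <= dz c). { intros c. unfold dz, dot. apply rsum_nonneg. intros; cbv beta; apply sq_nonneg. }
  set (E := fun r => exists c, C1 c /\ r = - dz c).
  assert (HEb : bound E). { exists 0. intros r [c [Hc ->]]. specialize (Hdz0 c). lra. }
  assert (HEn : exists r, E r). { exists (- dz origin). exists origin. split; [exact (proj2 H1)|auto]. }
  destruct (completeness E HEb HEn) as [s [Hs1 Hs2]].
  set (d2 := - s).
  assert (Hinf : forall c, C1 c -> d2 <= dz c). { intros c Hc. assert (- dz c <= s) by (apply Hs1; exists c; auto). unfold d2; lra. }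
  assert (Hex : forall k, exists c, C1 c /\ dz c <= d2 + / INR (S k)).
  { intros k. apply NNPP. intros Hn.
    assert (Hpos : 0 < / INR (S k)) by (apply Rinv_0_lt_compat, lt_0_INR; lia).
    assert (s <= s - / INR (S k)); [|lra].
    apply Hs2. intros r [c [Hc ->]]. destruct (Rle_dec (- dz c) (s - / INR (S k))); auto.
    exfalso. apply Hn. exists c. split; auto. unfold d2. lra. }
  destruct (choice _ Hex) as [cs Hc].
  destruct (cv_pts n C1 cs H1 (fun k => proj1 (Hc k))) as [phi [y [Hphi [Hy Hcv]]]].
  assert (Hyin : inRn n y) by exact (Ko_in n C1 y H1 Hy).
  assert (Hdy : dz y = d2).
  { apply Rle_antisym; [|apply Hinf; auto].
    apply (cv_eps_upper (fun k => dz (cs (phi k)))).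
    - intros k. destruct (Hc (phi k)) as [_ Hk].
      assert (/ INR (S (phi k)) <= / INR (S k)).
      { apply Rinv_le_contravar; [apply lt_0_INR; lia | apply le_INR; specialize (Hphi k); lia]. }
      lra.
    - unfold dz, dot. apply cv_rsum. intros j _. apply CV_mult; apply CV_minus; try apply cv_const; auto. }
  set (w := fun i => z i - y i).
  assert (Hwin : inRn n w). { intros i Hi. unfold w. rewrite Hzin, Hyin by auto. ring. }
  assert (Hd2pos : 0 < d2).
  { destruct (Rle_lt_dec d2 0) as [Hle|]; auto. exfalso. apply Hnz.
    assert (Hz0 : dz y = 0) by (specialize (Hdz0 y); lra).
    replace z with y; auto. apply functional_extensionality. intros i.
    destruct (Nat.lt_ge_cases i n).
    - pose proof (rsum_sq_zero n (fun i => z i - y i) Hz0 i H). lra.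
    - rewrite Hzin, Hyin by auto. reflexivity. }
  assert (Hcl : forall c, C1 c -> dot n w c <= dot n w y).
  { intros c Hc1.
    set (W := dot n w (fun i => c i - y i)). set (Ee := dot n (fun i => c i - y i) (fun i => c i - y i)).
    assert (HEe : 0 <= Ee). { unfold Ee, dot. apply rsum_nonneg. intros; cbv beta; apply sq_nonneg. }
    assert (HW : dot n w c - dot n w y = W).
    { unfold W, dot. rewrite <- (Rmult_1_l (rsum n (fun i => w i * c i))).
      replace (1 * rsum n (fun i => w i * c i) - rsum n (fun i => w i * y i)) with
        (1 * rsum n (fun i => w i * c i) + (-1) * rsum n (fun i => w i * y i)) by ring.
      rewrite <- rsum_lin. apply rsum_ext. intros; ring. }
    assert (Hq : forall t, 0 <= t <= 1 -> 0 <= - 2 * t * W + t * t * Ee).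
    { intros t Ht. destruct H1 as [[_ [_ [Hconv _]]] _].
      pose proof (Hinf _ (Hconv c y t Hc1 Hy Ht)) as Hq.
      rewrite <- Hdy in Hq. unfold dz, dot in Hq.
      replace (rsum n (fun i => (z i - (t * c i + (1 - t) * y i)) * (z i - (t * c i + (1 - t) * y i))))
        with (1 * rsum n (fun i => (z i - y i) * (z i - y i)) + (-2 * t) * rsum n (fun i => w i * (c i - y i))
              + (t * t) * rsum n (fun i => (c i - y i) * (c i - y i))) in Hq.
      - unfold W, Ee, dot. lra.
      - rewrite <- rsum_lin3. apply rsum_ext. intros; unfold w; ring. }
    destruct (Rle_lt_dec W 0) as [HW0|HW0]; [lra|]. exfalso.
    set (t := W / (Ee + W)).
    assert (Ht1 : 0 < t) by (unfold t; apply Rdiv_lt_0_compat; lra).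
    assert (HtE : t * (Ee + W) = W) by (unfold t; field; lra).
    assert (Ht2 : t <= 1).
    { destruct (Rle_lt_dec t 1); auto. exfalso. assert (t * (Ee + W) > 1 * (Ee + W)) by (apply Rmult_gt_compat_r; lra). lra. }
    specialize (Hq t ltac:(lra)).
    assert (HtEe : t * Ee = W - t * W) by (rewrite <- HtE at 1; ring).
    replace (- 2 * t * W + t * t * Ee) with (t * (- 2 * W + (W - t * W))) in Hq by (rewrite <- HtEe; ring).
    assert (t * (-2 * W + (W - t * W)) < 0); [|lra].
    replace (t * (-2 * W + (W - t * W))) with (- (t * (W + t * W))) by ring.
    assert (0 < t * (W + t * W)); [|lra]. apply Rmult_lt_0_compat; [lra|]. assert (0 < t * W) by (apply Rmult_lt_0_compat; lra). lra. }
  destruct (hsupp_spec n C1 w H1) as [[c1 [Hc1 Hc1e]] _].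
  destruct (hsupp_spec n C2 w H2) as [_ Hm2].
  pose proof (Hm2 z Hz). pose proof (Hcl c1 Hc1). rewrite (Hh w Hwin) in Hc1e.
  assert (Hwz : dot n w z - dot n w y = d2).
  { rewrite <- Hdy. unfold dz, dot. rewrite <- (Rmult_1_l (rsum n (fun i => w i * z i))).
    replace (1 * rsum n (fun i => w i * z i) - rsum n (fun i => w i * y i)) with
      (1 * rsum n (fun i => w i * z i) + (-1) * rsum n (fun i => w i * y i)) by ring.
    rewrite <- rsum_lin. apply rsum_ext. intros; unfold w; ring. }
  lra.
Qed.


Definition lowinv (n : nat) (A L : mat) : Prop :=
  forall i k, (i < n)%nat -> (k < n)%nat ->
    rsum n (fun j => L i j * A j k) = if Nat.eqb i k then 1 else 0.

Lemma set_ext (K L : vset) : (forall x, K x <-> L x) -> K = L.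
Proof. intros H. apply functional_extensionality. intros x. apply propositional_extensionality. auto. Qed.

Definition AT (n : nat) (A : mat) (x : vec) : vec :=
  fun j => if Nat.ltb j n then rsum n (fun i => A i j * x i) else 0.

Lemma AT_inRn n A x : inRn n (AT n A x).
Proof. intros i Hi. unfold AT. destruct (Nat.ltb_spec i n); [lia|reflexivity]. Qed.

Lemma mapply_inRn n A x : inRn n (mapply n A x).
Proof. intros i Hi. unfold mapply. destruct (Nat.ltb_spec i n); [lia|reflexivity]. Qed.

Lemma mapply_lin n A x y t : mapply n A (fun i => t * x i + (1 - t) * y i) =
  (fun i => t * mapply n A x i + (1 - t) * mapply n A y i).
Proof. apply functional_extensionality. intros i. unfold mapply. destruct (Nat.ltb i n); [|ring].
  rewrite <- rsum_lin. apply rsum_ext. intros; ring. Qed.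

Lemma mapply_origin n A : mapply n A origin = origin.
Proof. apply functional_extensionality. intros i. unfold mapply, origin. destruct (Nat.ltb i n); [|reflexivity].
  rewrite (rsum_ext n _ (fun _ => 0)). apply rsum_zero. intros; ring. Qed.

Lemma dot_mapply n A x y : dot n x (mapply n A y) = dot n (AT n A x) y.
Proof.
  unfold dot, mapply, AT.
  rewrite (rsum_ext n (fun i => x i * (if Nat.ltb i n then rsum n (fun j => A i j * y j) else 0))
             (fun i => rsum n (fun j => x i * A i j * y j))).
  2:{ intros i Hi. destruct (Nat.ltb_spec i n); [|lia]. rewrite <- rsum_scal. apply rsum_ext. intros; ring. }
  rewrite rsum_swap. apply rsum_ext. intros j Hj. destruct (Nat.ltb_spec j n); [|lia].
  rewrite Rmult_comm. rewrite <- rsum_scal. apply rsum_ext. intros; ring.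
Qed.

Lemma hsupp_img n A C x : hsupp n (img n A C) x = hsupp n C (AT n A x).
Proof.
  unfold hsupp. f_equal. apply functional_extensionality. intros v. apply propositional_extensionality.
  unfold is_max_dot, img. split.
  - intros [[y [[z [Hz ->]] Hv]] Hm]. split.
    + exists z. split; auto. rewrite <- dot_mapply. auto.
    + intros y Hy. rewrite <- dot_mapply. apply Hm. eauto.
  - intros [[y [Hy Hv]] Hm]. split.
    + exists (mapply n A y). split; eauto. rewrite dot_mapply. auto.
    + intros y' [z [Hz ->]]. rewrite dot_mapply. auto.
Qed.

Lemma Ko_img n A K : Ko n K -> Ko n (img n A K).
Proof.
  intros HK. pose proof HK as HK'. destruct HK as [[Hin [Hne [Hcv [[M HM] Hcl]]]] Ho].
  assert (HM0 : 0 <= M). { specialize (HM origin Ho 0%nat). unfold origin in HM. rewrite Rabs_R0 in HM. auto. }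
  set (B := rsum n (fun i => rsum n (fun j => Rabs (A i j)))).
  assert (HB0 : forall i, (i < n)%nat -> rsum n (fun j => Rabs (A i j)) <= B).
  { intros i Hi. apply (rsum_term n (fun i => rsum n (fun j => Rabs (A i j)))); auto.
    intros; apply rsum_nonneg; intros; apply Rabs_pos. }
  assert (HBp : 0 <= B). { apply rsum_nonneg. intros; apply rsum_nonneg; intros; apply Rabs_pos. }
  split; [split; [|split; [|split; [|split]]]|].
  - intros y [x [Hx ->]]. apply mapply_inRn.
  - exists (mapply n A origin). exists origin. auto.
  - intros y1 y2 t [x1 [Hx1 ->]] [x2 [Hx2 ->]] Ht. exists (fun i => t * x1 i + (1 - t) * x2 i).
    split; auto. rewrite mapply_lin. reflexivity.
  - exists (M * B). intros y [x [Hx ->]] i. unfold mapply. destruct (Nat.ltb_spec i n).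
    + eapply Rle_trans; [apply rsum_abs|].
      apply Rle_trans with (rsum n (fun j => M * Rabs (A i j))).
      * apply rsum_le. intros j _. rewrite Rabs_mult, Rmult_comm. apply Rmult_le_compat_r. apply Rabs_pos. auto.
      * rewrite rsum_scal. apply Rmult_le_compat_l; auto.
    + rewrite Rabs_R0. apply Rmult_le_pos; auto.
  - intros ys z Hys Hz.
    assert (Hex : forall k, exists x, K x /\ ys k = mapply n A x) by (intros k; apply Hys).
    destruct (choice _ Hex) as [xs Hxs].
    destruct (cv_pts n K xs HK' (fun k => proj1 (Hxs k))) as [phi [x [Hphi [Hx Hcvx]]]].
    exists x. split; auto. apply functional_extensionality. intros i.
    apply (UL_sequence (fun k => ys (phi k) i)).
    + apply (cv_sub (fun k => ys k i)); auto.
    + apply (cv_ext (fun k => mapply n A (xs (phi k)) i)).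
      { intros k. rewrite (proj2 (Hxs (phi k))). reflexivity. }
      unfold mapply. destruct (Nat.ltb i n).
      * apply cv_rsum. intros j _. apply CV_mult. apply cv_const. auto.
      * apply cv_const.
  - exists origin. split; auto. symmetry. apply mapply_origin.
Qed.

Definition seg (K : vset) (u : vec) (a b : R) : vset :=
  fun y => exists x s, K x /\ a <= s <= b /\ y = (fun i => x i + s * u i).

Lemma seg_contains K u a b x : a <= 0 <= b -> K x -> seg K u a b x.
Proof. intros H Hx. exists x, 0. split; auto. split; auto. apply functional_extensionality; intros; ring. Qed.

Lemma Ko_seg n K u a b : Ko n K -> inRn n u -> a <= 0 <= b -> Ko n (seg K u a b).
Proof.
  intros HK Hu Hab. pose proof HK as HK'. destruct HK as [[Hin [Hne [Hcv [[M HM] Hcl]]]] Ho].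
  destruct (inRn_bound n u Hu) as [Bu HBu].
  assert (HBu0 : 0 <= Bu) by (specialize (HBu 0%nat); pose proof (Rabs_pos (u 0%nat)); lra).
  assert (HM0 : 0 <= M). { specialize (HM origin Ho 0%nat). unfold origin in HM. rewrite Rabs_R0 in HM. auto. }
  split; [split; [|split; [|split; [|split]]]|].
  - intros y [x [s [Hx [Hs ->]]]] i Hi. rewrite (Hin x Hx i Hi), (Hu i Hi). ring.
  - exists origin. apply seg_contains; auto.
  - intros y1 y2 t [x1 [s1 [Hx1 [Hs1 ->]]]] [x2 [s2 [Hx2 [Hs2 ->]]]] Ht.
    exists (fun i => t * x1 i + (1 - t) * x2 i), (t * s1 + (1 - t) * s2). split; [auto|split].
    + assert (t * a <= t * s1 <= t * b) by (split; apply Rmult_le_compat_l; lra).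
      assert ((1-t) * a <= (1-t) * s2 <= (1-t) * b) by (split; apply Rmult_le_compat_l; lra). lra.
    + apply functional_extensionality; intros; ring.
  - exists (M + (Rabs a + Rabs b) * Bu). intros y [x [s [Hx [Hs ->]]]] i.
    eapply Rle_trans; [apply Rabs_triang|]. apply Rplus_le_compat; auto.
    rewrite Rabs_mult. apply Rmult_le_compat; try apply Rabs_pos; auto.
    unfold Rabs; destruct (Rcase_abs s), (Rcase_abs a), (Rcase_abs b); lra.
  - intros ys z Hys Hz.
    assert (Hex : forall k, exists xs : vec * R, K (fst xs) /\ a <= snd xs <= b /\ ys k = (fun i => fst xs i + snd xs * u i)).
    { intros k. destruct (Hys k) as [x [s H]]. exists (x, s). exact H. }
    destruct (choice _ Hex) as [xs Hxs].
    destruct (bw1 (fun k => snd (xs k)) a b) as [phi [l [Hphi Hl]]].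
    { intros k. apply Hxs. }
    assert (Hlab : a <= l <= b).
    { split. apply (cv_le_lower _ _ _ (fun k => proj1 (proj1 (proj2 (Hxs (phi k))))) Hl).
      apply (cv_le_upper _ _ _ (fun k => proj2 (proj1 (proj2 (Hxs (phi k))))) Hl). }
    exists (fun i => z i - l * u i), l. split; [|split; [auto|]].
    + apply (Hcl (fun k => fst (xs (phi k)))). intros; apply Hxs.
      intros i. apply (cv_ext (fun k => ys (phi k) i - snd (xs (phi k)) * u i)).
      { intros k. destruct (Hxs (phi k)) as [_ [_ ->]]. ring. }
      apply CV_minus. apply (cv_sub (fun k => ys k i)); auto.
      apply (cv_ext (fun k => snd (xs (phi k)) * u i)); [reflexivity|].
      apply CV_mult; auto. apply cv_const.
    + apply functional_extensionality; intros; ring.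
  - apply seg_contains; auto.
Qed.

Lemma powr_inj p a b : 0 < p -> 0 <= a -> 0 <= b -> powr a p = powr b p -> a = b.
Proof.
  intros Hp Ha Hb. unfold powr. destruct (Rlt_dec 0 a), (Rlt_dec 0 b); intros H.
  - unfold Rpower in H. apply exp_inv in H. apply ln_inv; auto.
    apply Rmult_eq_reg_l with p; lra.
  - exfalso. unfold Rpower in H. pose proof (exp_pos (p * ln a)). lra.
  - exfalso. unfold Rpower in H. pose proof (exp_pos (p * ln b)). lra.
  - lra.
Qed.

Lemma lowinv_apply n A L x : lowinv n A L -> inRn n x -> mapply n L (mapply n A x) = x.
Proof.
  intros HL Hx. apply functional_extensionality. intros i. unfold mapply at 1.
  destruct (Nat.ltb_spec i n) as [Hi|Hi]; [|symmetry; auto].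
  rewrite (rsum_ext n (fun j => L i j * mapply n A x j) (fun j => rsum n (fun k => L i j * A j k * x k))).
  2:{ intros j Hj. unfold mapply. destruct (Nat.ltb_spec j n); [|lia]. rewrite <- rsum_scal. apply rsum_ext. intros; ring. }
  rewrite rsum_swap.
  rewrite (rsum_ext n _ (fun k => if Nat.eqb k i then x i else 0)).
  - apply rsum_delta; auto.
  - intros k Hk. rewrite (rsum_ext n _ (fun j => x k * (L i j * A j k))) by (intros; ring).
    rewrite rsum_scal, HL by auto. destruct (Nat.eqb_spec i k), (Nat.eqb_spec k i); subst; try lia; ring.
Qed.

Lemma lowinv_inj n A L x y : lowinv n A L -> inRn n x -> inRn n y -> mapply n A x = mapply n A y -> x = y.
Proof. intros HL Hx Hy H. rewrite <- (lowinv_apply n A L x), <- (lowinv_apply n A L y), H; auto. Qed.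

Lemma img_union n A P Q : img n A (setU P Q) = setU (img n A P) (img n A Q).
Proof. apply set_ext. intros y. unfold img, setU. split.
  - intros [x [[Hx|Hx] ->]]; [left|right]; eauto.
  - intros [[x [Hx ->]]|[x [Hx ->]]]; eauto. Qed.

Lemma img_inter n A L P Q : lowinv n A L -> (forall x, P x -> inRn n x) -> (forall x, Q x -> inRn n x) ->
  img n A (setI P Q) = setI (img n A P) (img n A Q).
Proof. intros HL HP HQ. apply set_ext. intros y. unfold img, setI. split.
  - intros [x [[Hx1 Hx2] ->]]. split; eauto.
  - intros [[x1 [Hx1 ->]] [x2 [Hx2 He]]]. exists x1. split; auto. split; auto.
    replace x1 with x2; auto. apply (lowinv_inj n A L); auto. Qed.

Module Bridge.
Import ssreflect ssrfun ssrbool eqtype ssrnat seq fintype bigop ssralg matrix Rstruct.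
Import GRing.Theory.
Local Open Scope ring_scope.

Lemma sum_rsum (n : nat) (F : nat -> R) :
  (\sum_(j < n) F (nat_of_ord j))%R = rsum n F.
Proof.
elim: n => [|n IH]; first by rewrite big_ord0.
by rewrite big_ord_recr /= IH.
Qed.

Definition tomx (n : nat) (A : mat) : 'M[R]_n := \matrix_(i < n, j < n) A i j.

Lemma det_eq (n : nat) (A : mat) : det n A = \det (tomx n A).
Proof.
elim: n A => [|m IH] A.
  by rewrite /= det_mx00.
transitivity (rsum m.+1 (fun j => (-1) ^ j * A 0%N j *
      det m (fun i k => A (S i) (if Nat.ltb k j then k else S k)))); first by [].
rewrite -sum_rsum (expand_det_row _ ord0).
apply: eq_bigr => j _.
rewrite /cofactor IH !mxE.
have -> : row' ord0 (col' j (tomx m.+1 A)) =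
  tomx m (fun i k => A (S i) (if Nat.ltb k j then k else S k)).
  apply/matrixP => i k; rewrite !mxE /= /bump.
  case: (Nat.ltb_spec k j) => H.
  - have -> : (j <= k)%N = false by apply/negbTE; rewrite -ltnNge; apply/ltP.
    by [].
  - have -> : (j <= k)%N = true by apply/leP.
    by [].
rewrite add0n.
have -> : ((-1) ^+ j)%R = pow (-1) j.
  elim: (nat_of_ord j) => [|t IHt] //=. by rewrite exprS IHt.
by rewrite mulrA [pow _ _ * _]mulrC.
Qed.

Lemma left_inv (n : nat) (A : mat) : det n A <> 0 -> exists L, lowinv n A L.
Proof.
move=> H.
case: n A H => [|m] A H.
  exists (fun _ _ => 0) => i k Hi; lia.
set M := tomx m.+1 A.
have uM : M \in unitmx.
  rewrite unitmxE -det_eq unitfE; apply/eqP => //.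
exists (fun i j => invmx M (inord i) (inord j)) => i k Hi Hk.
have Hi' : (i < m.+1)%N by apply/ltP.
have Hk' : (k < m.+1)%N by apply/ltP.
rewrite -sum_rsum.
have E : (\sum_(j < m.+1) invmx M (inord i) (inord j) * A j k) =
         (invmx M *m M) (inord i) (inord k).
  rewrite mxE; apply: eq_bigr => j _.
  by rewrite inord_val /M /tomx mxE inordK.
rewrite E mulVmx // mxE.
case: (Nat.eqb_spec i k) => [->|Hne]; first by rewrite eqxx.
case: eqP => // /(congr1 val); rewrite /= !inordK // => ?; by [].
Qed.
End Bridge.

Lemma left_inv' (n : nat) (A : mat) : det n A <> 0 -> exists L, lowinv n A L.
Proof. intros H. apply Bridge.left_inv. exact H. Qed.


Definition fam (r : nat) (x0 : vec) (v u : nat -> vec) : nat -> vec :=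
  fun i j => if Nat.ltb i r then v i j - x0 j else u i j.

Definition upd (v : nat -> vec) (r : nat) (w : vec) : nat -> vec :=
  fun i => if Nat.eqb i r then w else v i.

Definition Dk (n r : nat) (K : vset) : Prop :=
  exists x0 v u, K x0 /\ (forall i, (i < r)%nat -> K (v i)) /\ (forall i, inRn n (u i)) /\
    lin_indep n (fam r x0 v u).

Lemma lin_indep_ext n f g : (forall i j, (i < n)%nat -> (j < n)%nat -> g i j = f i j) ->
  lin_indep n f -> lin_indep n g.
Proof. intros H Hf c Hc. apply Hf. intros j Hj. rewrite <- (Hc j Hj). apply rsum_ext. intros i Hi. rewrite H; auto. Qed.

Lemma lin_indep_scale n f d : lin_indep n f -> (forall i, d i <> 0) -> lin_indep n (fun i j => d i * f i j).
Proof. intros Hf Hd c Hc i Hi.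
  assert (c i * d i = 0).
  { apply (Hf (fun i => c i * d i)); auto. intros j Hj. rewrite <- (Hc j Hj). apply rsum_ext. intros; ring. }
  apply Rmult_integral in H. destruct H; auto. exfalso; apply (Hd i); auto. Qed.

Lemma D_init n K : Ko n K -> Dk n 0 K.
Proof.
  intros HK. exists origin, (fun _ => origin), (fun i j => if andb (Nat.eqb i j) (Nat.ltb j n) then 1 else 0).
  split; [apply HK|split; [intros; lia|split]].
  - intros i j Hj. destruct (Nat.ltb_spec j n); [lia|]. rewrite Bool.andb_false_r. reflexivity.
  - intros c Hc i Hi. rewrite <- (Hc i Hi). unfold fam. simpl.
    rewrite (rsum_ext n _ (fun k => if Nat.eqb k i then c i else 0)).
    + symmetry. apply rsum_delta; auto.
    + intros k Hk. destruct (Nat.eqb_spec k i), (Nat.ltb_spec i n); subst; try lia; simpl; ring.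
Qed.

Lemma D_full n K : Dk n n K -> full_dim n K.
Proof.
  intros [x0 [v [u [Hx0 [Hv [Hu Hl]]]]]]. exists x0, v. split; [auto|split; [auto|]].
  eapply lin_indep_ext; [|exact Hl]. intros i j Hi Hj. unfold fam. destruct (Nat.ltb_spec i n); [reflexivity|lia].
Qed.

Lemma D_step_seg n r K x0 v u a b s : K x0 -> (forall i, (i < r)%nat -> K (v i)) -> (forall i, inRn n (u i)) ->
  lin_indep n (fam r x0 v u) -> (r < n)%nat -> a <= 0 <= b -> a <= s <= b -> s <> 0 ->
  Dk n (S r) (seg K (u r) a b).
Proof.
  intros Hx0 Hv Hu Hl Hr Hab Hs Hs0.
  exists x0, (upd v r (fun j => x0 j + s * u r j)), u. split; [apply seg_contains; auto|split; [|split; auto]].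
  - intros i Hi. unfold upd. destruct (Nat.eqb_spec i r).
    + exists x0, s. auto.
    + apply seg_contains; auto. apply Hv. lia.
  - apply (lin_indep_ext n (fun i j => (if Nat.eqb i r then s else 1) * fam r x0 v u i j)).
    + intros i j Hi Hj. unfold fam, upd. destruct (Nat.eqb_spec i r), (Nat.ltb_spec i r), (Nat.ltb_spec i (S r)); subst; try lia; ring.
    + apply lin_indep_scale; auto. intros i. destruct (Nat.eqb i r); [exact Hs0|lra].
Qed.

Lemma span_lemma n f g r : lin_indep n f -> (r < n)%nat -> ~ lin_indep n g ->
  (forall i j, i <> r -> g i j = f i j) ->
  exists al : nat -> R, forall j, (j < n)%nat ->
    g r j + rsum n (fun i => (if Nat.eqb i r then 0 else al i) * f i j) = 0.
Proof.
  intros Hf Hr Hg Hgf.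
  apply NNPP. intros Hn. apply Hg. intros c Hc.
  destruct (Req_dec (c r) 0) as [Hcr|Hcr].
  - apply Hf. intros j Hj. rewrite <- (Hc j Hj). apply rsum_ext. intros i Hi.
    destruct (Nat.eq_dec i r); [subst; rewrite Hcr; ring|rewrite Hgf; auto].
  - exfalso. apply Hn. exists (fun i => c i / c r). intros j Hj.
    pose proof (Hc j Hj) as H. rewrite (rsum_pick n r) in H by auto.
    rewrite (rsum_ext n (fun i => (if Nat.eqb i r then 0 else c i / c r) * f i j)
        (fun i => / c r * (if Nat.eqb i r then 0 else c i * g i j))).
    + rewrite rsum_scal. set (S := rsum n (fun i => if Nat.eqb i r then 0 else c i * g i j)) in *.
      replace (g r j + / c r * S) with (/ c r * (c r * g r j + S)) by (field; auto).
      rewrite H. ring.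
    + intros i Hi. destruct (Nat.eqb_spec i r); [ring|]. rewrite Hgf by auto. field. auto.
Qed.

Lemma inter_lemma n r K x0 v u : (forall x, K x -> inRn n x) -> lin_indep n (fam r x0 v u) -> (r < n)%nat ->
  (forall w, K w -> ~ lin_indep n (fam (S r) x0 (upd v r w) u)) ->
  setI (seg K (u r) 0 1) (seg K (u r) (-1) 0) = K.
Proof.
  intros Hin Hl Hr Hno. apply set_ext. intros y. split.
  - intros [[k1 [s [Hk1 [Hs E1]]]] [k2 [s' [Hk2 [Hs' E2]]]]].
    assert (Hgf : forall w i j, i <> r -> fam (S r) x0 (upd v r w) u i j = fam r x0 v u i j).
    { intros w i j Hi. unfold fam, upd. destruct (Nat.eqb_spec i r), (Nat.ltb_spec i r), (Nat.ltb_spec i (S r)); try lia; reflexivity. }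
    assert (Hgr : forall w j, fam (S r) x0 (upd v r w) u r j = w j - x0 j).
    { intros w j. unfold fam, upd. rewrite Nat.eqb_refl. destruct (Nat.ltb_spec r (S r)); [reflexivity|lia]. }
    destruct (span_lemma n _ _ r Hl Hr (Hno k1 Hk1) (Hgf k1)) as [al Hal].
    destruct (span_lemma n _ _ r Hl Hr (Hno k2 Hk2) (Hgf k2)) as [be Hbe].
    set (e := fun i => if Nat.eqb i r then s - s' else be i - al i).
    assert (He : e r = 0).
    { apply Hl; auto. intros j Hj. rewrite (rsum_pick n r) by auto.
      specialize (Hal j Hj). specialize (Hbe j Hj). rewrite Hgr in Hal, Hbe.
      assert (Ej : k1 j + s * u r j = k2 j + s' * u r j).
      { rewrite E1 in E2. exact (equal_f E2 j). }
      replace (rsum n (fun i => if Nat.eqb i r then 0 else e i * fam r x0 v u i j)) with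
        (1 * rsum n (fun i => (if Nat.eqb i r then 0 else be i) * fam r x0 v u i j) +
         (-1) * rsum n (fun i => (if Nat.eqb i r then 0 else al i) * fam r x0 v u i j)).
      + unfold e. rewrite Nat.eqb_refl. unfold fam at 1. destruct (Nat.ltb_spec r r); [lia|]. lra.
      + rewrite <- rsum_lin. apply rsum_ext. intros i _. unfold e. destruct (Nat.eqb i r); ring. }
    unfold e in He. rewrite Nat.eqb_refl in He.
    assert (s = 0) by lra. subst s y. replace (fun i => k1 i + 0 * u r i) with k1; auto.
    apply functional_extensionality; intros; ring.
  - intros Hy. split; apply seg_contains; auto; lra.
Qed.

Lemma union_lemma K u : setU (seg K u 0 1) (seg K u (-1) 0) = seg K u (-1) 1.
Proof. apply set_ext. intros y. unfold setU. split.
  - intros [[x [s [Hx [Hs ->]]]]|[x [s [Hx [Hs ->]]]]]; exists x, s; split; auto; split; auto; lra.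
  - intros [x [s [Hx [Hs ->]]]]. destruct (Rle_lt_dec 0 s).
    + left. exists x, s. split; auto; split; auto; lra.
    + right. exists x, s. split; auto; split; auto; lra.
Qed.

Lemma combine n p Y (M N L : mat) K P Q W : 1 <= p -> Lp_Minkowski_valuation n p Y -> lowinv n M L ->
  Ko n K -> Ko n P -> Ko n Q -> Ko n W -> setI P Q = K -> setU P Q = W ->
  Y (img n M P) = img n N (Y P) -> Y (img n M Q) = img n N (Y Q) -> Y (img n M W) = img n N (Y W) ->
  Y (img n M K) = img n N (Y K).
Proof.
  intros Hp [HYK HV] HL HK HP HQ HW HI HU GP GQ GW.
  assert (HMI : setI (img n M P) (img n M Q) = img n M K).
  { rewrite <- HI. symmetry. apply (img_inter n M L); auto; [intros x Hx; exact (Ko_in n P x HP Hx)|intros x Hx; exact (Ko_in n Q x HQ Hx)]. }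
  assert (HMU : setU (img n M P) (img n M Q) = img n M W).
  { rewrite <- HU. symmetry. apply img_union. }
  assert (HYMK : Ko n (Y (img n M K))) by (apply HYK, Ko_img; auto).
  assert (HNK : Ko n (img n N (Y K))) by (apply Ko_img, HYK; auto).
  assert (Hh : forall x, inRn n x -> hsupp n (Y (img n M K)) x = hsupp n (img n N (Y K)) x).
  { intros x Hx.
    pose proof (HV (img n M P) (img n M Q) (Ko_img n M P HP) (Ko_img n M Q HQ)) as V1.
    rewrite HMU, HMI in V1. specialize (V1 (Ko_img n M W HW) x Hx).
    pose proof (HV P Q HP HQ) as V2. rewrite HU, HI in V2. specialize (V2 HW (AT n N x) (AT_inRn n N x)).
    rewrite GP, GQ, GW, !hsupp_img in V1.
    apply (powr_inj p); [lra|apply hsupp_nonneg; auto|apply hsupp_nonneg; auto|].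
    rewrite hsupp_img. lra. }
  apply set_ext. intros z. split.
  - apply (sep n); auto. intros a Ha. symmetry. auto.
  - apply (sep n); auto.
Qed.

Lemma core n p Y (M N L : mat) : 1 <= p -> Lp_Minkowski_valuation n p Y -> lowinv n M L ->
  (forall K, Ko n K -> full_dim n K -> Y (img n M K) = img n N (Y K)) ->
  forall K, Ko n K -> Y (img n M K) = img n N (Y K).
Proof.
  intros Hp HV HL Hfull.
  assert (Hind : forall k r K, (r + k = n)%nat -> Ko n K -> Dk n r K -> Y (img n M K) = img n N (Y K)).
  { induction k; intros r K Hrk HK HD.
    - apply Hfull; auto. apply D_full. assert (r = n) by lia. subst r. exact HD.
    - destruct HD as [x0 [v [u [Hx0 [Hv [Hu Hl]]]]]].
      assert (Hr : (r < n)%nat) by lia.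
      assert (Hin : forall x, K x -> inRn n x) by (intros; eapply Ko_in; eauto).
      destruct (classic (exists w, K w /\ lin_indep n (fam (S r) x0 (upd v r w) u))) as [[w [Hw Hlw]]|Hno].
      + apply (IHk (S r)); auto; [lia|]. exists x0, (upd v r w), u. split; [auto|split; [|split; auto]].
        intros i Hi. unfold upd. destruct (Nat.eqb_spec i r); auto. apply Hv. lia.
      + assert (Hno' : forall w, K w -> ~ lin_indep n (fam (S r) x0 (upd v r w) u)) by (intros w Hw Hc; apply Hno; eauto).
        apply (combine n p Y M N L K (seg K (u r) 0 1) (seg K (u r) (-1) 0) (seg K (u r) (-1) 1)); auto.
        * apply Ko_seg; auto; lra.
        * apply Ko_seg; auto; lra.
        * apply Ko_seg; auto; lra.
        * apply (inter_lemma n r K x0 v u); auto.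
        * apply union_lemma.
        * apply (IHk (S r)); [lia|apply Ko_seg; auto; lra|]. apply (D_step_seg n r K x0 v u 0 1 1); auto; lra.
        * apply (IHk (S r)); [lia|apply Ko_seg; auto; lra|]. apply (D_step_seg n r K x0 v u (-1) 0 (-1)); auto; lra.
        * apply (IHk (S r)); [lia|apply Ko_seg; auto; lra|]. apply (D_step_seg n r K x0 v u (-1) 1 1); auto; lra. }
  intros K HK. apply (Hind n 0%nat); auto. apply D_init; auto.
Qed.


Definition diag (l : R) : mat := fun i j => if Nat.eqb i j then l else 0.

Lemma dilate_img n l K : (forall x, K x -> inRn n x) -> dilate l K = img n (diag l) K.
Proof.
  intros Hin. apply set_ext. intros y. unfold dilate, img.
  assert (E : forall x, K x -> (fun i => l * x i) = mapply n (diag l) x).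
  { intros x Hx. apply functional_extensionality. intros i. unfold mapply, diag.
    destruct (Nat.ltb_spec i n).
    - rewrite (rsum_ext n _ (fun j => if Nat.eqb j i then l * x i else 0)).
      + symmetry. apply rsum_delta; auto.
      + intros j _. destruct (Nat.eqb_spec i j), (Nat.eqb_spec j i); subst; try lia; ring.
    - rewrite (Hin x Hx i) by lia. ring. }
  split; intros [x [Hx ->]]; exists x; split; auto; rewrite E; auto.
Qed.

Lemma lowinv_diag n l : l <> 0 -> lowinv n (diag l) (diag (/ l)).
Proof.
  intros Hl i k Hi Hk. unfold diag.
  rewrite (rsum_ext n _ (fun j => if Nat.eqb j i then (if Nat.eqb i k then 1 else 0) else 0)).
  - apply rsum_delta; auto.
  - intros j _. destruct (Nat.eqb_spec i j), (Nat.eqb_spec j i), (Nat.eqb_spec j k), (Nat.eqb_spec i k); subst; try lia; try ring.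
    field; auto.
Qed.

Lemma lowinv_contra n A B : inv_transpose n A B -> lowinv n A (fun i j => B j i).
Proof.
  intros H i k Hi Hk. rewrite (rsum_ext n _ (fun j => A j k * B j i)) by (intros; ring).
  rewrite H by auto. rewrite Nat.eqb_sym. reflexivity.
Qed.

Theorem lemma4p2 (n : nat) (p q : R) (Y : vset -> vset) :
  1 <= p ->
  Lp_Minkowski_valuation n p Y ->
  (* SL(n) covariant case *)
  ((forall K, Ko n K -> full_dim n K ->
      (forall A, SL n A -> Y (img n A K) = img n A (Y K)) /\
      (forall l, 0 < l -> Y (dilate l K) = dilate (Rpower l q) (Y K))) ->
   forall K, Ko n K ->
      (forall A, SL n A -> Y (img n A K) = img n A (Y K)) /\
      (forall l, 0 < l -> Y (dilate l K) = dilate (Rpower l q) (Y K)))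
  /\
  (* SL(n) contravariant case *)
  ((forall K, Ko n K -> full_dim n K ->
      (forall A B, SL n A -> inv_transpose n A B ->
         Y (img n A K) = img n B (Y K)) /\
      (forall l, 0 < l -> Y (dilate l K) = dilate (Rpower l q) (Y K))) ->
   forall K, Ko n K ->
      (forall A B, SL n A -> inv_transpose n A B ->
         Y (img n A K) = img n B (Y K)) /\
      (forall l, 0 < l -> Y (dilate l K) = dilate (Rpower l q) (Y K))).
Proof.
  intros Hp HV.
  assert (HYin : forall X, Ko n X -> forall x, Y X x -> inRn n x).
  { intros X HX x Hx. exact (Ko_in n (Y X) x (proj1 HV X HX) Hx). }
  assert (Hin : forall X, Ko n X -> forall x, X x -> inRn n x).
  { intros X HX x Hx. exact (Ko_in n X x HX Hx). }
  assert (Hdil : forall (H : forall K, Ko n K -> full_dim n K ->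
                   forall l, 0 < l -> Y (dilate l K) = dilate (Rpower l q) (Y K)),
             forall K, Ko n K -> forall l, 0 < l -> Y (dilate l K) = dilate (Rpower l q) (Y K)).
  { intros H K HK l Hl.
    rewrite (dilate_img n l K (Hin K HK)), (dilate_img n (Rpower l q) (Y K) (HYin K HK)).
    apply (core n p Y (diag l) (diag (Rpower l q)) (diag (/ l))); auto.
    - apply lowinv_diag. lra.
    - intros X HX HF. rewrite <- (dilate_img n l X (Hin X HX)), <- (dilate_img n (Rpower l q) (Y X) (HYin X HX)).
      apply H; auto. }
  split.
  - intros H K HK. split.
    + intros A HA. destruct (left_inv' n A) as [L HL]. { unfold SL in HA. rewrite HA. intro Hc; lra. }
      apply (core n p Y A A L); auto. intros X HX HF. apply (proj1 (H X HX HF)); auto.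
    + apply Hdil; auto. intros X HX HF. apply (proj2 (H X HX HF)).
  - intros H K HK. split.
    + intros A B HA HAB.
      apply (core n p Y A B (fun i j => B j i)); auto.
      * apply lowinv_contra; auto.
      * intros X HX HF. apply (proj1 (H X HX HF)); auto.
    + apply Hdil; auto. intros X HX HF. apply (proj2 (H X HX HF)).
Qed.
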